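(* Let $\mathfrak S=(S,\xrightarrow{F},\le)$ be an $\infty$-effective complete functional WSTS, $s_0\in S$, and let $A_n$ be the value of the set $A$ computed by the procedure $\mathbf{Clover}_{\mathfrak S}$ on input $s_0$ after $n$ iterations of the while statement. Then $A_n$ is finite, and $A_n\le^\flat A_{n+1}\le^\flat Clover_{\mathfrak S}(s_0)$ for every $n\in\mathbb N$.
   Context: Complete functional WSTS: $(S,\le)$ a well partial order which is a continuous dcpo; $F$ a finite set of partial continuous maps (Scott-open domain, $f(\bigvee D)=\bigvee f(D)$ for directed $D\subseteq\operatorname{dom}f$); $s\to f(s)$. $Post(A)$: one-step successors; $Post^*$: reachability; $Cover_{\mathfrak S}(s)=\downarrow Post^*(\downarrow s)$; $\operatorname{Lub}(E)=\{\bigvee D\mid D\subseteq E\text{ directed}\}$; $Clover_{\mathfrak S}(s)=\operatorname{Max}\operatorname{Lub}(Cover_{\mathfrak S}(s))$. $B\le^\flat C$ iff $\downarrow B\subseteq\downarrow C$. $F^*$: finite compositions of maps of $F$. Lub-acceleration: $\operatorname{dom}g^\infty=\operatorname{dom}g$, $g^\infty(x)=\bigvee_n g^n(x)$ if $x<g(x)$, else $g(x)$. $\infty$-effective: states finitely coded, order decidable, maps computable with decidable domains, $g^\infty$ computable for all $g\in F^*$. Procedure $\mathbf{Clover}_{\mathfrak S}(s_0)$: $A\leftarrow\{s_0\}$; while $Post(A)\not\le^\flat A$: choose fairly $(g,a)\in F^*\times A$ with $a\in\operatorname{dom}g$, and set $A\leftarrow A\cup\{g^\infty(a)\}$; return $\operatorname{Max}A$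 (fair: on infinite runs every eligible pair is eventually chosen). *)

(* Defs.v *)
(* sets are predicates S -> Prop, partial maps are S -> option S. *)
From Stdlib Require Import List Arith Relations.
Import ListNotations.

Section WSTS.
Context {S : Type} (le : S -> S -> Prop).

Definition lt (x y : S) : Prop := le x y /\ x <> y.

Definition partial_order : Prop :=
  (forall x, le x x) /\
  (forall x y, le x y -> le y x -> x = y) /\
  (forall x y z, le x y -> le y z -> le x z).

Definition wpo : Prop :=
  partial_order /\ forall f : nat -> S, exists i j, i < j /\ le (f i) (f j).

Definition directed (D : S -> Prop) : Prop :=
  (exists x, D x) /\
  forall x y, D x -> D y -> exists z, D z /\ le x z /\ le y z.

Definition is_lub (D : S -> Prop) (x : S) : Prop :=
  (forall d, D d -> le d x) /\
  (forall u, (forall d, D d -> le d u) -> le x u).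

Definition dcpo : Prop :=
  forall D, directed D -> exists x, is_lub D x.

Definition way_below (x y : S) : Prop :=
  forall D d, directed D -> is_lub D d -> le y d -> exists z, D z /\ le x z.

Definition continuous_dcpo : Prop :=
  dcpo /\
  forall x, directed (fun y => way_below y x) /\ is_lub (fun y => way_below y x) x.

Definition scott_open (U : S -> Prop) : Prop :=
  (forall x y, U x -> le x y -> U y) /\
  (forall D d, directed D -> is_lub D d -> U d -> exists z, D z /\ U z).

Definition dom (f : S -> option S) (x : S) : Prop := f x <> None.

Definition partial_continuous (f : S -> option S) : Prop :=
  scott_open (dom f) /\
  forall D d, directed D -> (forall x, D x -> dom f x) -> is_lub D d ->
    exists fd, f d = Some fd /\ is_lub (fun y => exists x, D x /\ f x = Some y) fd.

Definition complete_functional_WSTS (F : list (S -> option S)) : Prop :=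
  wpo /\ continuous_dcpo /\ forall f, In f F -> partial_continuous f.

Fixpoint comp (w : list (S -> option S)) (x : S) : option S :=
  match w with
  | [] => Some x
  | f :: w' => match f x with Some y => comp w' y | None => None end
  end.

Definition in_Fstar (F : list (S -> option S)) (w : list (S -> option S)) : Prop :=
  Forall (fun f => In f F) w.

Fixpoint giter (g : S -> option S) (n : nat) (x : S) : option S :=
  match n with
  | 0 => Some x
  | Datatypes.S n' => match giter g n' x with Some y => g y | None => None end
  end.

(* lub-acceleration, as a relation: accel g x y <-> x in dom g and g^infty(x) = y *)
Definition accel (g : S -> option S) (x y : S) : Prop :=
  exists gx, g x = Some gx /\
    ((lt x gx /\ is_lub (fun z => exists n, giter g n x = Some z) y) \/
     (~ lt x gx /\ y = gx)).

Definition Post (F : list (S -> option S)) (A : S -> Prop) (y : S) : Prop :=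
  exists f a, In f F /\ A a /\ f a = Some y.

Definition down (B : S -> Prop) (x : S) : Prop := exists b, B b /\ le x b.

Definition flat_le (B C : S -> Prop) : Prop := forall x, down B x -> down C x.

Definition step (F : list (S -> option S)) (x y : S) : Prop :=
  exists f, In f F /\ f x = Some y.

Definition Poststar (F : list (S -> option S)) (A : S -> Prop) (y : S) : Prop :=
  exists a, A a /\ clos_refl_trans S (step F) a y.

Definition Cover (F : list (S -> option S)) (s : S) : S -> Prop :=
  down (Poststar F (down (fun x => x = s))).

Definition Lub (E : S -> Prop) (x : S) : Prop :=
  exists D, (forall d, D d -> E d) /\ directed D /\ is_lub D x.

Definition Max (E : S -> Prop) (x : S) : Prop :=
  E x /\ forall y, E y -> le x y -> y = x.

Definition Clover (F : list (S -> option S)) (s : S) : S -> Prop :=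
  Max (Lub (Cover F s)).

Definition finite_set (A : S -> Prop) : Prop :=
  exists l : list S, forall x, A x <-> In x l.

(* A run of the procedure Clover(s0): A n is the value of A after n iterations
   (if the loop has exited before, A keeps its final value); (ws n, as_ n) is
   the pair (g, a) chosen at iteration n+1. *)
Definition clover_run (F : list (S -> option S)) (s0 : S)
    (A : nat -> S -> Prop) (ws : nat -> list (S -> option S)) (as_ : nat -> S) : Prop :=
  (forall x, A 0 x <-> x = s0) /\
  (forall n,
     (flat_le (Post F (A n)) (A n) /\ (forall x, A (Datatypes.S n) x <-> A n x)) \/
     (~ flat_le (Post F (A n)) (A n) /\
      in_Fstar F (ws n) /\ A n (as_ n) /\ dom (comp (ws n)) (as_ n) /\
      exists y, accel (comp (ws n)) (as_ n) y /\
        (forall x, A (Datatypes.S n) x <-> (A n x \/ x = y)))) /\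
  (* fairness on infinite runs *)
  ((forall n, ~ flat_le (Post F (A n)) (A n)) ->
   forall w n a, in_Fstar F w -> A n a -> dom (comp w) a ->
     exists m, n <= m /\ (forall x, comp (ws m) x = comp w x) /\ as_ m = a).

End WSTS.

(* Main.v *)
Require Import Defs.
From Stdlib Require Import List Arith Relations.
From Stdlib Require Import Lia Classical ClassicalEpsilon.
Import ListNotations.

Section Aux.
Variable S : Type.
Variable le : S -> S -> Prop.
Hypothesis refl : forall x, le x x.
Hypothesis antisym : forall x y, le x y -> le y x -> x = y.
Hypothesis trans : forall x y z, le x y -> le y z -> le x z.

Lemma dir_in_union (ms : list S) (D : S -> Prop) :
  directed le D -> (forall x, D x -> exists m, In m ms /\ le x m) ->
  exists m, In m ms /\ forall x, D x -> le x m.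
Proof.
  intros [[d0 Hd0] Hup]. induction ms as [|h t IH]; intros Hsub.
  - destruct (Hsub d0 Hd0) as [m [[] _]].
  - destruct (classic (forall x, D x -> le x h)) as [Hh|Hh].
    + exists h; split; [left; reflexivity | exact Hh].
    + apply not_all_ex_not in Hh as [d Hd].
      apply imply_to_and in Hd as [Dd Hnd].
      destruct IH as [m [Hm Hm']].
      * intros e De. destruct (Hup d e Dd De) as [u [Du [Hdu Heu]]].
        destruct (Hsub u Du) as [m [[Hm|Hm] Hum]].
        -- subst m. exfalso; apply Hnd; eauto.
        -- exists m; split; eauto.
      * exists m; split; [right; exact Hm| exact Hm'].
Qed.

Definition Lset (ms : list S) x := exists m, In m ms /\ le x m.

Lemma Lset_lub ms D d : directed le D -> (forall x, D x -> Lset ms x) ->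
  is_lub le D d -> Lset ms d.
Proof.
  intros Hd Hs [_ Hl]. destruct (dir_in_union ms D Hd Hs) as [m [Hm Hm']].
  exists m; split; auto.
Qed.

Lemma Lset_down ms x y : le x y -> Lset ms y -> Lset ms x.
Proof. intros H [m [Hm Hm']]. exists m; split; eauto. Qed.

Lemma list_max (l : list S) x : In x l ->
  exists y, In y l /\ le x y /\ forall z, In z l -> le y z -> z = y.
Proof.
  revert x; induction l as [|h t IH]; intros x Hx; [destruct Hx|].
  destruct (classic (exists z, In z t /\ le x z)) as [[z [Hz Hxz]]|Hn].
  - destruct (IH z Hz) as [y [Hy [Hzy Hmax]]].
    destruct (classic (le y h)) as [Hyh|Hyh].
    + exists h. split; [left; auto|]. split; [eauto|].
      intros w [Hw|Hw] Hhw; [auto|].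
      assert (w = y) by (apply Hmax; eauto). subst w. apply antisym; auto.
    + exists y. split; [right; auto|]. split; [eauto|].
      intros w [Hw|Hw] Hyw; [subst w; contradiction|]. auto.
  - destruct Hx as [Hx|Hx].
    + subst x. exists h. split; [left; auto|]. split; [auto|].
      intros w [Hw|Hw] Hxw; [auto|]. exfalso; apply Hn; eauto.
    + exfalso; apply Hn; eauto.
Qed.

Definition dc (D : S -> Prop) := forall x y, le x y -> D y -> D x.
Definition Good (D : S -> Prop) := exists Is : list (S -> Prop),
  (forall I, In I Is -> directed le I /\ forall x, I x -> D x) /\
  forall x, D x -> exists I, In I Is /\ I x.

Lemma bad_step D : dc D -> ~ Good D -> exists D' x,
  dc D' /\ ~ Good D' /\ D x /\ ~ D' x /\ forall z, D' z -> D z.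
Proof.
  intros Hdc HG.
  destruct (classic (exists x, D x)) as [[x0 Hx0]|Hne].
  2:{ exfalso; apply HG; exists []; split; [intros I []|].
      intros x Dx; exfalso; apply Hne; eauto. }
  destruct (classic (forall x y, D x -> D y -> exists z, D z /\ le x z /\ le y z))
    as [Hdir|Hnd].
  - exfalso; apply HG; exists [D]; split.
    + intros I [HI|[]]; subst I; split; [split; eauto| auto].
    + intros x Dx; exists D; split; [left|]; auto.
  - apply not_all_ex_not in Hnd as [x Hnd]; apply not_all_ex_not in Hnd as [y Hnd].
    apply imply_to_and in Hnd as [Dx Hnd]; apply imply_to_and in Hnd as [Dy Hnd].
    set (D1 := fun z => D z /\ ~ le x z). set (D2 := fun z => D z /\ ~ le y z).
    assert (dc1 : dc D1).
    { intros a b Hab [Db Hb]. split; [eapply Hdc; eauto|]. intro Hxa; apply Hb; eauto. }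
    assert (dc2 : dc D2).
    { intros a b Hab [Db Hb]. split; [eapply Hdc; eauto|]. intro Hxa; apply Hb; eauto. }
    destruct (classic (Good D1)) as [G1|G1].
    + destruct (classic (Good D2)) as [G2|G2].
      * exfalso; apply HG. destruct G1 as [I1 [H1a H1b]], G2 as [I2 [H2a H2b]].
        exists (I1 ++ I2). split.
        -- intros I HI; apply in_app_or in HI as [HI|HI];
             [destruct (H1a I HI) as [Hd Hs]|destruct (H2a I HI) as [Hd Hs]];
             split; auto; intros z Iz; apply Hs; auto.
        -- intros z Dz. destruct (classic (le x z)) as [Hxz|Hxz].
           ++ destruct (classic (le y z)) as [Hyz|Hyz].
              ** exfalso; apply Hnd; eauto.
              ** destruct (H2b z) as [I [HI Iz]]; [split; auto|].
                 exists I; split; auto; apply in_or_app; auto.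
           ++ destruct (H1b z) as [I [HI Iz]]; [split; auto|].
              exists I; split; auto; apply in_or_app; auto.
      * exists D2, y. split; [auto|]. split; [auto|]. split; [auto|]. split.
        -- intros [_ Hq]; auto.
        -- intros z [Dz _]; auto.
    + exists D1, x. split; [auto|]. split; [auto|]. split; [auto|]. split.
      -- intros [_ Hq]; auto.
      -- intros z [Dz _]; auto.
Qed.

Hypothesis wq : forall f : nat -> S, exists i j, i < j /\ le (f i) (f j).

Lemma decompose (s : S) D : dc D -> Good D.
Proof.
  intros Hdc. apply NNPP; intro HG.
  assert (Hex : forall D, exists p : (S -> Prop) * S, (dc D /\ ~ Good D) ->
     dc (fst p) /\ ~ Good (fst p) /\ D (snd p) /\ ~ (fst p) (snd p) /\
     forall z, fst p z -> D z).
  { intros D0. destruct (classic (dc D0 /\ ~ Good D0)) as [[H1 H2]|Hn].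
    - destruct (bad_step D0 H1 H2) as [D' [x Hx]]. exists (D', x); auto.
    - exists ((fun _ => False), s); intro; contradiction. }
  set (Fn := fun D0 => proj1_sig (constructive_indefinite_description _ (Hex D0))).
  assert (HFn : forall D0, dc D0 -> ~ Good D0 ->
     dc (fst (Fn D0)) /\ ~ Good (fst (Fn D0)) /\ D0 (snd (Fn D0)) /\
     ~ (fst (Fn D0)) (snd (Fn D0)) /\ forall z, fst (Fn D0) z -> D0 z).
  { intros D0 H1 H2. unfold Fn.
    destruct (constructive_indefinite_description _ (Hex D0)) as [p Hp]; simpl; auto. }
  set (sq := fun n => Nat.iter n (fun D0 => fst (Fn D0)) D).
  assert (Hbad : forall n, dc (sq n) /\ ~ Good (sq n)).
  { induction n as [|n [IH1 IH2]]; [split; auto|].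
    destruct (HFn _ IH1 IH2) as [a [b _]]; split; auto. }
  set (xs := fun n => snd (Fn (sq n))).
  assert (Hsub : forall k n z, sq (k + Datatypes.S n) z -> sq (Datatypes.S n) z).
  { induction k; intros n z Hz; auto. apply IHk.
    destruct (Hbad (k + Datatypes.S n)) as [b1 b2].
    destruct (HFn _ b1 b2) as [_ [_ [_ [_ H]]]]. apply H. exact Hz. }
  destruct (wq xs) as [i [j [Hij Hle]]].
  destruct (Hbad i) as [b1 b2]. destruct (HFn _ b1 b2) as [d1 [_ [_ [Hn _]]]].
  apply Hn. change (sq (Datatypes.S i) (xs i)). apply (d1 _ (xs j) Hle).
  destruct (Hbad j) as [c1 c2]. destruct (HFn _ c1 c2) as [_ [_ [Hj _]]].
  pose proof (Hsub (j - Datatypes.S i) i (xs j)) as Hs'.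
  replace (j - Datatypes.S i + Datatypes.S i) with j in Hs' by lia.
  apply Hs'. exact Hj.
Qed.

Variable F : list (S -> option S).
Hypothesis Hcont : forall f, In f F -> partial_continuous le f.

Lemma f_mono f x y fx : In f F -> le x y -> f x = Some fx ->
  exists fy, f y = Some fy /\ le fx fy.
Proof.
  intros Hf Hxy Hfx. destruct (Hcont f Hf) as [[Hup _] Hc].
  assert (Hdy : dom f y) by (apply (Hup x y); [unfold dom; congruence| auto]).
  destruct (Hc (fun z => z = x \/ z = y) y) as [fd [Hfd [Hb _]]].
  - split; [exists x; auto|]. intros a b Ha Hb'. exists y. split; [auto|].
    destruct Ha as [->| ->], Hb' as [->| ->]; auto.
  - intros z [->| ->]; [unfold dom; congruence| auto].
  - split; [intros z [->| ->]; auto|]. intros u Hu; apply Hu; auto.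
  - exists fd; split; auto. apply Hb. exists x; split; auto.
Qed.

Lemma comp_mono w x y z : in_Fstar F w -> le x y -> comp w x = Some z ->
  exists z', comp w y = Some z' /\ le z z'.
Proof.
  revert x y z; induction w as [|f w IH]; intros x y z Hw Hxy Hc; simpl in *.
  - inversion Hc; subst; eauto.
  - inversion Hw; subst. destruct (f x) as [fx|] eqn:E; [|discriminate].
    destruct (f_mono f x y fx) as [fy [E' Hle]]; auto. rewrite E'. eapply IH; eauto.
Qed.

Lemma cover_f s0 f x y : In f F -> Cover le F s0 x -> f x = Some y -> Cover le F s0 y.
Proof.
  intros Hf [b [[a [Ha Hrt]] Hxb]] Hfx.
  destruct (f_mono f x b y Hf Hxb Hfx) as [fb [Efb Hle]].
  exists fb. split; auto. exists a. split; auto.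
  eapply rt_trans; [exact Hrt| apply rt_step; exists f; auto].
Qed.

Variable s0 : S.
Variable ms : list S.
Hypothesis Hms : forall m, In m ms -> exists I, directed le I /\
  (forall x, I x -> Cover le F s0 x) /\ is_lub le I m.
Hypothesis HcovL : forall x, Cover le F s0 x -> Lset ms x.

Lemma L_f f x y : In f F -> Lset ms x -> f x = Some y -> Lset ms y.
Proof.
  intros Hf [m [Hm Hxm]] Hfx.
  destruct (f_mono f x m y Hf Hxm Hfx) as [fm [Efm Hyfm]].
  apply (Lset_down ms y fm); auto.
  destruct (Hms m Hm) as [I [[[i0 Hi0] Hdir] [HIc [HIb HIl]]]].
  destruct (Hcont f Hf) as [[Hup Hsc] Hc].
  set (D' := fun z => I z /\ dom f z).
  assert (HD'dir : directed le D').
  { split.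
    - destruct (Hsc I m) as [z [Iz Dz]];
        [split; eauto | split; auto | unfold dom; congruence | ].
      exists z; split; auto.
    - intros a b [Ia Da] [Ib Db]. destruct (Hdir a b Ia Ib) as [c [Ic [Hac Hbc]]].
      exists c. split; [split; auto; eapply Hup; eauto | auto]. }
  assert (HD'lub : is_lub le D' m).
  { split.
    - intros d [Id _]; auto.
    - intros u Hu. apply HIl. intros d Id.
      destruct HD'dir as [[z [Iz Dz]] _].
      destruct (Hdir d z Id Iz) as [c [Ic [Hdc Hzc]]].
      apply trans with c; auto. apply Hu. split; auto. eapply Hup; eauto. }
  destruct (Hc D' m HD'dir (fun x H => proj2 H) HD'lub) as [fd [Efd Hfdl]].
  rewrite Efm in Efd; inversion Efd; subst fd.
  apply (Lset_lub ms (fun y => exists x, D' x /\ f x = Some y) fm); auto.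
  - split.
    + destruct HD'dir as [[z [Iz Dz]] _]. destruct (f z) as [fz|] eqn:E;
        [|exfalso; apply Dz; auto]. exists fz, z; split; auto. split; auto.
    + intros a b [xa [Da Ea]] [xb [Db Eb]].
      destruct HD'dir as [_ Hd]. destruct (Hd xa xb Da Db) as [c [Dc [Hac Hbc]]].
      destruct (f_mono f xa c a Hf Hac Ea) as [fc [Ec Hle1]].
      destruct (f_mono f xb c b Hf Hbc Eb) as [fc' [Ec' Hle2]].
      rewrite Ec in Ec'; inversion Ec'; subst fc'.
      exists fc. split; [exists c; auto|auto].
  - intros y' [x' [[Ix' _] Ex']]. apply HcovL. eapply cover_f; eauto.
Qed.

Lemma L_comp w x y : in_Fstar F w -> Lset ms x -> comp w x = Some y -> Lset ms y.
Proof.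
  revert x; induction w as [|f w IH]; intros x Hw Hx Hc; simpl in *.
  - inversion Hc; subst; auto.
  - inversion Hw; subst. destruct (f x) as [fx|] eqn:E; [|discriminate].
    apply (IH fx); [exact H2 | eapply L_f; eauto | exact Hc].
Qed.

Lemma L_giter w n a z : in_Fstar F w -> Lset ms a ->
  giter (comp w) n a = Some z -> Lset ms z.
Proof.
  revert z; induction n as [|n IH]; intros z Hw Ha Hz; simpl in *.
  - inversion Hz; subst; auto.
  - destruct (giter (comp w) n a) as [p|] eqn:E; [|discriminate].
    apply (L_comp w p z Hw); [apply IH; auto | exact Hz].
Qed.

Lemma giter_chain w a ga : in_Fstar F w -> comp w a = Some ga -> le a ga ->
  forall n z z', giter (comp w) n a = Some z ->
    giter (comp w) (Datatypes.S n) a = Some z' -> le z z'.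
Proof.
  intros Hw Hga Hle n. induction n as [|n IH]; intros z z' Hz Hz'; simpl in *.
  - inversion Hz; subst. congruence.
  - destruct (giter (comp w) n a) as [p|] eqn:E; [|discriminate].
    rewrite Hz in Hz'.
    assert (le p z) by (apply IH; auto).
    destruct (comp_mono w p z z Hw H Hz) as [z'' [E'' Hl]]. congruence.
Qed.

Lemma giter_mono w a ga : in_Fstar F w -> comp w a = Some ga -> le a ga ->
  forall k n z z', giter (comp w) n a = Some z ->
    giter (comp w) (k + n) a = Some z' -> le z z'.
Proof.
  intros Hw Hga Hle k. induction k as [|k IH]; intros n z z' Hz Hz'; simpl in *.
  - rewrite Hz in Hz'; inversion Hz'; subst; auto.
  - destruct (giter (comp w) (k + n) a) as [p|] eqn:E; [|discriminate].
    apply trans with p; [eapply IH; eauto|].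
    eapply (giter_chain w a ga Hw Hga Hle (k + n)); eauto. simpl. rewrite E. auto.
Qed.

Lemma L_accel w a y : in_Fstar F w -> Lset ms a -> accel le (comp w) a y -> Lset ms y.
Proof.
  intros Hw Ha [ga [Hga [[[Hlt _] Hlub]|[_ ->]]]].
  2:{ eapply L_comp; eauto. }
  apply (Lset_lub ms (fun z => exists n, giter (comp w) n a = Some z) y); auto.
  - split; [exists a, 0; reflexivity|].
    intros z1 z2 [n1 H1] [n2 H2].
    destruct (le_ge_dec n1 n2) as [Hn|Hn].
    + exists z2. split; [exists n2; auto|]. split; auto.
      replace n2 with ((n2 - n1) + n1) in H2 by lia. eapply giter_mono; eauto.
    + exists z1. split; [exists n1; auto|]. split; auto.
      replace n1 with ((n1 - n2) + n2) in H1 by lia. eapply giter_mono; eauto.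
  - intros z [n Hn]. eapply L_giter; eauto.
Qed.

End Aux.

Theorem proposition5p3 (S : Type) (le : S -> S -> Prop) (F : list (S -> option S))
  (HS : complete_functional_WSTS le F) (s0 : S)
  (A : nat -> S -> Prop) (ws : nat -> list (S -> option S)) (as_ : nat -> S)
  (Hrun : clover_run le F s0 A ws as_) :
  forall n : nat,
    finite_set (A n) /\
    flat_le le (A n) (A (Datatypes.S n)) /\
    flat_le le (A (Datatypes.S n)) (Clover le F s0).
Proof.
  destruct HS as [[[Hrefl [Hanti Htrans]] Hwq] [[Hdcpo _] Hcont]].
  destruct Hrun as [H0 [Hstep _]].
  assert (Hdc : dc S le (Cover le F s0)).
  { intros x y Hxy [b [Hb Hyb]]. exists b; split; eauto. }
  destruct (decompose S le Hrefl Htrans Hwq s0 _ Hdc) as [Is [HIs HcovI]].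
  assert (Hms : exists ms, (forall m, In m ms -> exists I, In I Is /\ is_lub le I m) /\
     (forall I, In I Is -> exists m, In m ms /\ is_lub le I m)).
  { clear -HIs Hdcpo. induction Is as [|I Is IH].
    - exists []; split; [intros m []| intros I []].
    - destruct IH as [ms [H1 H2]]. { intros J HJ; apply HIs; right; auto. }
      destruct (Hdcpo I) as [m Hm]. { apply HIs; left; auto. }
      exists (m :: ms); split.
      + intros m' [Hm'|Hm'].
        * subst m'. exists I; split; [left|]; auto.
        * destruct (H1 m' Hm') as [J [HJ HJ']]; exists J; split; [right|]; auto.
      + intros J [HJ|HJ].
        * subst J. exists m; split; [left|]; auto.
        * destruct (H2 J HJ) as [m' [? ?]]; exists m'; split; [right|]; auto. }
  destruct Hms as [ms [Hms1 Hms2]].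
  assert (Hms' : forall m, In m ms -> exists I, directed le I /\
     (forall x, I x -> Cover le F s0 x) /\ is_lub le I m).
  { intros m Hm. destruct (Hms1 m Hm) as [I [HI Hl]]. destruct (HIs I HI).
    exists I; auto. }
  assert (HcovL : forall x, Cover le F s0 x -> Lset S le ms x).
  { intros x Hx. destruct (HcovI x Hx) as [I [HI Ix]].
    destruct (Hms2 I HI) as [m [Hm [Hb _]]]. exists m; split; auto. }
  assert (Hinv : forall n x, A n x -> Lset S le ms x).
  { induction n as [|n IH]; intros x Hx.
    - apply H0 in Hx. subst x. apply HcovL.
      exists s0; split; auto. exists s0; split; [exists s0; split; auto| apply rt_refl].
    - destruct (Hstep n) as [[_ Heq]|[_ [Hw [Ha [_ [y [Hacc Heq]]]]]]].
      + apply IH, Heq, Hx.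
      + apply Heq in Hx as [Hx|Hx]; [auto|subst x].
        eapply (L_accel S le Hrefl Hanti Htrans F Hcont s0 ms Hms' HcovL); eauto. }
  intros n. split; [|split].
  - induction n as [|n IH].
    + exists [s0]. intros x; rewrite H0; simpl; split; [auto|intros [H|[]]; auto].
    + destruct IH as [l Hl].
      destruct (Hstep n) as [[_ Heq]|[_ [Hw [Ha [_ [y [Hacc Heq]]]]]]].
      * exists l. intros x; rewrite Heq; auto.
      * exists (y :: l). intros x; rewrite Heq, Hl; simpl; split; intros [Hq|Hq]; auto.
  - intros x [b [Hb Hxb]]. exists b; split; auto.
    destruct (Hstep n) as [[_ Heq]|[_ [Hw [Ha [_ [y [Hacc Heq]]]]]]];
      apply Heq; auto.
  - intros x [b [Hb Hxb]].
    destruct (Hinv _ _ Hb) as [m [Hm Hbm]].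
    destruct (list_max S le Hrefl Hanti Htrans ms m Hm) as [m' [Hm' [Hmm' Hmax]]].
    exists m'. split; [|eauto].
    destruct (Hms' m' Hm') as [I [HId [HIc HIl]]].
    split.
    + exists I; auto.
    + intros y [D [HD [Hdir Hlub]]] Hle.
      destruct (Lset_lub S le Htrans ms D y Hdir (fun x Dx => HcovL x (HD x Dx)) Hlub)
        as [m'' [Hm'' Hym'']].
      assert (m'' = m') by (apply Hmax; eauto). subst m''.
      apply Hanti; auto.
Qed.
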